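(* Let $\tilde G$ be a disjoint set of pseudo-generators and let $\tilde H\subseteq\tilde G$ consist of $r$ distinct pseudo-generators. Then every operator in the pseudo-product of $\tilde H$ has weight at least $r$.
   Context: $\mathfrak P$ is the group of $N$-qubit Pauli operators modulo phases; $X_k,Z_k$ are the Pauli $X$, $Z$ on qubit $k$; $\mathcal G(T)$ is the set of all products of elements of $T$ (including the identity $I$). The weight of a Pauli operator is its number of non-identity tensor factors. A pseudo-generator is a set of one or two Pauli operators. A set $\tilde G$ of pseudo-generators is disjoint if for every $\tilde g\in\tilde G$ there is a qubit $k$ such that every operator in $\mathcal G(\tilde g)\setminus\{I\}$ anticommutes with $X_k$ or with $Z_k$ (or both), while both $X_k$ and $Z_k$ commute with every operator in $\bigcup_{\tilde g'\in\tilde G\setminus\{\tilde g\}}\mathcal G(\tilde g')$. The pseudo-product of a set of $r$ pseudo-generators $\tilde g_1,\dots,\tilde g_r$ is the set of all products $x_1x_2\cdots x_r$ with $x_j\in\mathcal G(\tilde g_j)\setminus\{I\}$ for each $j$. *)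

(* Defs.v *)
From mathcomp Require Import all_boot.
Set Implicit Arguments. Unset Strict Implicit. Unset Printing Implicit Defensive.

(* An N-qubit Pauli operator modulo phases: at each qubit k, a pair (x,z) of
   bits, (false,false)=I, (true,false)=X, (false,true)=Z, (true,true)=Y. *)
Definition pauli (N : nat) := {ffun 'I_N -> bool * bool}.

Definition pI {N : nat} : pauli N := [ffun _ => (false, false)].

Definition pmul {N : nat} (p q : pauli N) : pauli N :=
  [ffun k => ((p k).1 (+) (q k).1, (p k).2 (+) (q k).2)].

Definition pX {N : nat} (k : 'I_N) : pauli N :=
  [ffun j => (j == k, false)].
Definition pZ {N : nat} (k : 'I_N) : pauli N :=
  [ffun j => (false, j == k)].

(* p and q anticommute iff the symplectic form is odd *)
Definition anticomm {N : nat} (p q : pauli N) : bool :=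
  \big[addb/false]_(k < N) (((p k).1 && (q k).2) (+) ((p k).2 && (q k).1)).

Definition weight {N : nat} (p : pauli N) : nat :=
  #|[set k : 'I_N | p k != (false, false)]|.

Definition gen {N : nat} (T : {set pauli N}) : {set pauli N} :=
  [set \big[pmul/pI]_(s in S) s | S : {set pauli N} in powerset T].

Definition pseudo_gen {N : nat} (g : {set pauli N}) : bool :=
  (1 <= #|g| <= 2).

Definition disjoint_pg {N : nat} (Gt : {set {set pauli N}}) : Prop :=
  (forall g, g \in Gt -> pseudo_gen g) /\
  forall g, g \in Gt -> exists k : 'I_N,
    (forall p, p \in gen g :\ pI -> anticomm p (pX k) || anticomm p (pZ k)) /\
    (forall g', g' \in Gt :\ g -> forall p, p \in gen g' ->
        ~~ anticomm (pX k) p && ~~ anticomm (pZ k) p).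

Definition pseudo_prod {N : nat} (H : {set {set pauli N}}) : {set pauli N} :=
  [set p | [exists f : {ffun {set pauli N} -> pauli N},
     [forall g in H, f g \in gen g :\ pI] && (p == \big[pmul/pI]_(g in H) f g)]].

(* Main.v *)
From Stdlib Require Import ClassicalEpsilon.
Require Import Defs.
From mathcomp Require Import all_boot.
Set Implicit Arguments. Unset Strict Implicit.

Lemma sum_eq1 N (b : 'I_N -> bool) k :
  \big[addb/false]_(j < N) ((j == k) && b j) = b k.
Proof.
rewrite (bigD1 k) //= eqxx /= big1 ?addbF // => j /negbTE -> //.
Qed.

Lemma acXl N (k : 'I_N) (q : pauli N) : anticomm (pX k) q = (q k).2.
Proof.
rewrite /anticomm -(sum_eq1 (fun j => (q j).2) k).
by apply: eq_bigr => j _; rewrite ffunE /= addbF.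
Qed.

Lemma acZl N (k : 'I_N) (q : pauli N) : anticomm (pZ k) q = (q k).1.
Proof.
rewrite /anticomm -(sum_eq1 (fun j => (q j).1) k).
by apply: eq_bigr => j _; rewrite ffunE /=.
Qed.

Lemma acXr N (k : 'I_N) (q : pauli N) : anticomm q (pX k) = (q k).2.
Proof.
rewrite /anticomm -(sum_eq1 (fun j => (q j).2) k).
by apply: eq_bigr => j _; rewrite ffunE /= andbF andbC.
Qed.

Lemma acZr N (k : 'I_N) (q : pauli N) : anticomm q (pZ k) = (q k).1.
Proof.
rewrite /anticomm -(sum_eq1 (fun j => (q j).1) k).
by apply: eq_bigr => j _; rewrite ffunE /= andbF addbF andbC.
Qed.

Lemma bigpmulE N (I : Type) (s : seq I) (P : pred I) (F : I -> pauli N) k :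
  (\big[pmul/pI]_(i <- s | P i) F i) k =
  (\big[addb/false]_(i <- s | P i) (F i k).1,
   \big[addb/false]_(i <- s | P i) (F i k).2).
Proof.
elim: s => [|a s IH]; first by rewrite !big_nil ffunE.
rewrite !big_cons; case: (P a) => //.
by rewrite ffunE IH.
Qed.

Theorem lemma12 (N : nat) (Gt Ht : {set {set pauli N}}) (r : nat) :
  disjoint_pg Gt -> Ht \subset Gt -> #|Ht| = r ->
  forall p, p \in pseudo_prod Ht -> r <= weight p.
Proof.
move=> [_ Hd] sHG <- p.
rewrite inE => /existsP [f /andP [/forallP Hf /eqP ->]].
have [->|[g0 g0H]] := set_0Vmem Ht; first by rewrite cards0.
have [k0 _] := Hd g0 (subsetP sHG g0 g0H).
pose Pk g (k : 'I_N) :=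
    (forall p, p \in gen g :\ pI -> anticomm p (pX k) || anticomm p (pZ k)) /\
    (forall g', g' \in Gt :\ g -> forall p, p \in gen g' ->
        ~~ anticomm (pX k) p && ~~ anticomm (pZ k) p).
have Hex : forall g, exists k, g \in Gt -> Pk g k.
  move=> g; case gG: (g \in Gt); last by exists k0.
  by have [k Hk] := Hd g gG; exists k.
pose kf g := proj1_sig (constructive_indefinite_description _ (Hex g)).
have Hkf : forall g, g \in Gt -> Pk g (kf g).
  by move=> g; exact: (proj2_sig (constructive_indefinite_description _ (Hex g))).
have Hfg : forall g, g \in Ht -> f g != pI /\ f g \in gen g.
  by move=> g gH; move: (Hf g); rewrite gH /= in_setD1 => /andP.
have zero : forall g g', g \in Ht -> g' \in Ht -> g' != g ->
    f g' (kf g) = (false, false).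
  move=> g g' gH g'H ne.
  have [_ H2] := Hkf g (subsetP sHG g gH).
  have := H2 g'; rewrite in_setD1 ne (subsetP sHG g' g'H) => /(_ isT (f g')).
  case: (Hfg g' g'H) => _ /[swap] /[apply].
  rewrite acXl acZl; case: (f g' (kf g)) => [[] []] //.
have nz : forall g, g \in Ht -> f g (kf g) != (false, false).
  move=> g gH; have [H1 _] := Hkf g (subsetP sHG g gH).
  have [n0 m] := Hfg g gH.
  have := H1 (f g); rewrite in_setD1 n0 m => /(_ isT).
  rewrite acXr acZr; case: (f g (kf g)) => [[] []] //.
have inj : {in Ht &, injective kf}.
  move=> g g' gH g'H e; apply/eqP; apply/negPn/negP => ne.
  by have := nz g gH; rewrite e zero ?eqxx // eq_sym.
rewrite /weight -(card_in_imset inj); apply: subset_leq_card.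
apply/subsetP => _ /imsetP [g gH ->]; rewrite inE bigpmulE.
rewrite [X in (X, _)](bigD1 g) //= [X in (_, X)](bigD1 g) //=.
rewrite big1 ?addbF; last by move=> g' /andP [g'H ne]; rewrite zero.
rewrite big1 ?addbF; last by move=> g' /andP [g'H ne]; rewrite zero.
by have := nz g gH; case: (f g (kf g)).
Qed.
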